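(* There is no impartial deterministic selection mechanism that always selects a winner and is $\alpha$-additive for some $\alpha\le 2$; i.e., for every such mechanism $f$ (defined on all $\mathcal{G}_n$) there exist $n$ and $\mathbf{x}\in\mathcal{G}_n$ with $\Delta(\mathbf{x})-\delta(f(\mathbf{x}),\mathbf{x})>2$.
   Context: $\mathcal{G}_n$ is the set of all directed graphs (nomination profiles) on $N=\{1,\dots,n\}$ with no self-loops; each vertex may nominate any set of other vertices, including none. For a profile $\mathbf{x}$, $x_u$ is the set of outgoing edges of $u$ and $(x'_u,\mathbf{x}_{-u})$ is the profile with $u$'s outgoing edges replaced by $x'_u$. $\delta(u,\mathbf{x})$ is the in-degree of $u$ and $\Delta(\mathbf{x})=\max_u\delta(u,\mathbf{x})$. A deterministic selection mechanism maps each profile to a single winner vertex $f(\mathbf{x})$. It is impartial if for every $\mathbf{x}$, $u$ and $x'_u$, $u$ is the winner under $\mathbf{x}$ iff $u$ is the winner under $(x'_u,\mathbf{x}_{-u})$. It is $\alpha$-additive if $\max_{\mathbf{x}\in\mathcal{G}_n}\{\Delta(\mathbf{x})-\delta(f(\mathbf{x}),\mathbf{x})\}\le\alpha$ for every $n$. *)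

(* Defs.v *)
From mathcomp Require Import all_boot.
Set Implicit Arguments. Unset Strict Implicit. Unset Printing Implicit Defensive.

(* A nomination profile on vertex set 'I_n: x u is the set of vertices u nominates. *)
Definition profile (n : nat) := {ffun 'I_n -> {set 'I_n}}.

Definition loopless n (x : profile n) : Prop := forall u : 'I_n, u \notin x u.

Definition update n (x : profile n) (u : 'I_n) (xu : {set 'I_n}) : profile n :=
  [ffun v => if v == u then xu else x v].

Definition indeg n (u : 'I_n) (x : profile n) : nat := #|[set v | u \in x v]|.

Definition maxdeg n (x : profile n) : nat := \max_(v : 'I_n) indeg v x.

(* A deterministic selection mechanism: for every n >= 1 (vertex set 'I_n.+1,
   so there is always a vertex to select) maps each profile to a winner. *)
Definition mechanism := forall n : nat, profile n.+1 -> 'I_n.+1.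

Definition impartial (f : mechanism) : Prop :=
  forall (n : nat) (x : profile n.+1) (u : 'I_n.+1) (xu : {set 'I_n.+1}),
    loopless x -> u \notin xu ->
    (f n x == u) = (f n (update x u xu) == u).

(* Main.v *)
Require Import Defs.
From mathcomp Require Import all_boot.

Set Implicit Arguments. Unset Strict Implicit. Unset Printing Implicit Defensive.

(* Computer-found unsatisfiable core: 49 profiles on 4 vertices (rows as bitmasks). *)

Definition bt (k v : nat) : bool := odd (k %/ 2 ^ v).

Definition P (m : seq nat) : profile 4 :=
  [ffun u : 'I_4 => [set v : 'I_4 | bt (nth 0 m u) v]].

Definition myindeg (m : seq nat) (v : nat) : nat :=
  count (fun u => bt (nth 0 m u) v) (iota 0 4).

Definition mymax (m : seq nat) : nat :=
  maxn (myindeg m 0) (maxn (myindeg m 1) (maxn (myindeg m 2) (maxn (myindeg m 3) 0))).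

Lemma indegE m (v : 'I_4) : indeg v (P m) = myindeg m v.
Proof.
rewrite /indeg -sum1_card big_mkcond /= !big_ord_recl big_ord0 /myindeg /=.
by rewrite !inE !ffunE !inE /= !addn0.
Qed.

Lemma maxdegE m : maxdeg (P m) = mymax m.
Proof.
rewrite /maxdeg !big_ord_recl big_ord0 !indegE.
reflexivity.
Qed.

Definition loopfree (m : seq nat) : bool :=
  all (fun u => ~~ bt (nth 0 m u) u) (iota 0 4).

Lemma loopfreeP m : loopfree m -> loopless (P m).
Proof.
move=> h u; rewrite ffunE inE.
by move/allP: h => /(_ (val u)); rewrite mem_iota ltn_ord /=; apply.
Qed.

Definition diffrow (m m' : seq nat) : option nat :=
  if [seq w <- iota 0 4 | nth 0 m w != nth 0 m' w] is [:: w] then Some w else None.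

Lemma diffrow_lt m m' u : diffrow m m' = Some u -> u < 4.
Proof.
rewrite /diffrow.
case E: [seq w <- iota 0 4 | nth 0 m w != nth 0 m' w] => [|w [|? ?]] //= [<-].
have : w \in [seq w <- iota 0 4 | nth 0 m w != nth 0 m' w] by rewrite E inE.
by rewrite mem_filter mem_iota => /andP[_ /andP[_ ]].
Qed.

Lemma diffrowP m m' u : diffrow m m' = Some u ->
  forall U : 'I_4, val U = u -> P m' = update (P m) U (P m' U).
Proof.
rewrite /diffrow.
case E: [seq w <- iota 0 4 | nth 0 m w != nth 0 m' w] => [|w [|? ?]] //= [<-] U hU.
apply/ffunP => v; rewrite /update !ffunE.
case: eqP => [->|ne] //.
case: (eqVneq (nth 0 m v) (nth 0 m' v)) => [-> //|d].
have : val v \in [seq w <- iota 0 4 | nth 0 m w != nth 0 m' w].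
  by rewrite mem_filter d mem_iota ltn_ord.
rewrite E inE => /eqP hv; exfalso; apply: ne; apply: val_inj; exact: (etrans hv (esym hU)).
Qed.

Lemma transfer (f : mechanism) (hf : impartial f) m m' u :
  loopfree m -> loopfree m' -> diffrow m m' = Some u ->
  (val (f 3 (P m)) == u) = (val (f 3 (P m')) == u).
Proof.
move=> lm lm' h.
have hu := diffrow_lt h.
pose U : 'I_4 := Ordinal hu.
have e := diffrowP h (U := U) erefl.
rewrite e.
have := hf 3 (P m) U (P m' U) (loopfreeP lm) (loopfreeP lm' U).
by [].
Qed.

Definition L : seq (seq nat) := [:: [:: 2; 4; 2; 4]; [:: 2; 4; 2; 2]; [:: 2; 0; 2; 2]; [:: 2; 4; 3; 2]; [:: 2; 1; 3; 2]; [:: 2; 1; 3; 1]; [:: 2; 4; 3; 1]; [:: 2; 1; 1; 1]; [:: 2; 4; 1; 1]; [:: 0; 1; 1; 1]; [:: 4; 1; 3; 1]; [:: 4; 1; 3; 2]; [:: 4; 4; 3; 1]; [:: 4; 4; 3; 2]; [:: 4; 4; 2; 2]; [:: 4; 1; 2; 2]; [:: 4; 1; 2; 1]; [:: 4; 4; 2; 1]; [:: 4; 4; 2; 6]; [:: 4; 1; 2; 6]; [:: 2; 1; 2; 6]; [:: 2; 1; 1; 6]; [:: 2; 4; 1; 6]; [:: 4; 4; 1; 6]; [:: 4; 1; 1; 6]; [:: 4; 4; 8; 6]; [:: 2; 4; 8; 6]; [:: 2; 4; 8; 4]; [:: 4; 4; 1; 4]; [:: 4; 4; 0; 4]; [::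 2; 8; 2; 6]; [:: 2; 8; 2; 4]; [:: 2; 8; 8; 4]; [:: 2; 8; 8; 6]; [:: 12; 8; 8; 4]; [:: 12; 8; 2; 4]; [:: 12; 4; 2; 4]; [:: 12; 4; 1; 4]; [:: 12; 4; 1; 1]; [:: 12; 4; 2; 1]; [:: 12; 8; 2; 1]; [:: 12; 8; 8; 1]; [:: 8; 8; 8; 1]; [:: 10; 8; 8; 1]; [:: 10; 8; 2; 1]; [:: 10; 1; 2; 1]; [:: 10; 1; 2; 2]; [:: 10; 8; 2; 2]; [:: 8; 8; 8; 0]].

Definition unary (m : seq nat) (v : nat) : bool :=
  (v < 4) && (mymax m - myindeg m v <= 2).

Definition binp (m : seq nat) (a : nat) (m' : seq nat) (b : nat) : bool :=
  if diffrow m m' is Some u then (a == u) == (b == u) else true.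

Definition okext (p : seq (seq nat * nat)) (m : seq nat) (v : nat) : bool :=
  unary m v && all (fun q => binp q.1 q.2 m v) p.

Fixpoint search (Ls : seq (seq nat)) (p : seq (seq nat * nat)) : bool :=
  if Ls is m :: Ls' then
    if (if okext p m 0 then search Ls' ((m, 0) :: p) else false) then true else
    if (if okext p m 1 then search Ls' ((m, 1) :: p) else false) then true else
    if (if okext p m 2 then search Ls' ((m, 2) :: p) else false) then true else
    if (if okext p m 3 then search Ls' ((m, 3) :: p) else false) then true else false
  else true.

Lemma search_sound (g : seq nat -> nat) :
  (forall m, m \in L -> unary m (g m)) ->
  (forall m m', m \in L -> m' \in L -> binp m (g m) m' (g m')) ->
  search L [::].
Proof.
move=> hu hb.
have gen : forall Ls p, {subset Ls <= L} ->
    (forall q, q \in p -> q.1 \in L /\ q.2 = g q.1) -> search Ls p.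
  elim=> [|m Ls IH] p sub hp; first done.
  have mL : m \in L by apply: sub; rewrite inE eqxx.
  have sub' : {subset Ls <= L} by move=> y hy; apply: sub; rewrite inE hy orbT.
  have hok : okext p m (g m).
    rewrite /okext hu //=; apply/allP => q hq.
    have [q1L ->] := hp q hq; exact: hb.
  have hlt : g m < 4 by move: (hu m mL) => /andP[].
  have hrec : search Ls ((m, g m) :: p).
    apply: IH => // q; rewrite inE => /orP[/eqP -> //|]; exact: hp.
  have -> : search (m :: Ls) p =
      has (fun v => okext p m v && search Ls ((m, v) :: p)) (iota 0 4) by [].
  apply/hasP; exists (g m); first by rewrite mem_iota.
  by rewrite hok hrec.
by apply: gen => // q.
Qed.

Lemma search_false : search L [::] = false.
Proof. vm_compute. reflexivity. Qed.

Lemma L_loopfree : all loopfree L.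
Proof. vm_compute. reflexivity. Qed.

Theorem mainTheorem6 (f : mechanism) :
  impartial f ->
  exists (n : nat) (x : profile n.+1),
    loopless x /\ (maxdeg x - indeg (f n x) x > 2)%N.
Proof.
move=> hf.
case E: (has (fun m => 2 < maxdeg (P m) - indeg (f 3 (P m)) (P m)) L).
  move/hasP: E => [m mL hm]; exists 3, (P m); split => //.
  by apply: loopfreeP; move/allP: L_loopfree; apply.
exfalso; move/hasPn: E => E.
have lf : forall m, m \in L -> loopfree m.
  by move=> m hm; move/allP: L_loopfree; apply.
suff : search L [::] by rewrite search_false.
apply: (@search_sound (fun m => val (f 3 (P m)))) => //.
  move=> m hm; rewrite /unary ltn_ord /=.
  have := E _ hm; rewrite maxdegE indegE.
  by rewrite ltnNge negbK.
move=> m m' hm hm'.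
rewrite /binp; case D: diffrow => [u|] //.
by rewrite (transfer hf (lf m hm) (lf m' hm') D).
Qed.
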